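(* Let $n \geq 2$ and let $\sigma = (F_1, \ldots, F_n)$ be a sequence of sets of clauses. Run the following procedure on input $F_1, \ldots, F_n$: 1. Set $V_1 \leftarrow F_1 \setminus F_2$ and $C_1 \leftarrow F_1 \setminus V_1$. 2. For $i = 2, \ldots, n-1$ (in increasing order): (a) set $V_i \leftarrow F_i \setminus F_{i+1}$; (b) set $C_i \leftarrow (F_i \setminus F_{i-1}) \setminus V_i$; (c) for each clause $c \in V_i \cap F_{i-1}$: for $j = 1, \ldots, i-1$ (in increasing order), if $c \in C_j$, then set $C_j \leftarrow C_j \setminus \{c\}$, set $V_k \leftarrow V_k \cup \{c\}$ for every $k$ with $j \leq k \leq i-1$, and stop the loop over $j$ (proceed to the next clause $c$). 3. Set $C_n \leftarrow F_n \setminus F_{n-1}$ and $V_n \leftarrow \emptyset$. Then the procedure terminates, and on termination, for every $i$ with $1 \leq i \leq n$, the set $C_i$ is exactly the set of clauses that are cumulative in $F_i$ with respect to $\sigma$, and the set $V_i$ is exactly the set of clauses that are volatile in $F_i$ with respect to $\sigma$.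
   Context: A clause is a finite set (disjunction) of literals; only set membership of clauses matters here, so clauses may be treated as abstract elements. Given a sequence $\sigma = (F_1, \ldots, F_n)$ of sets of clauses and an index $1 \le i \le n$: - A clause $c$ is volatile in $F_i$ (with respect to $\sigma$) if $c \in F_i$ and there exists $j$ with $i < j \leq n$ such that $c \notin F_j$ (i.e., $c$ is removed at some later point). - A clause $c$ is cumulative in $F_i$ (with respect to $\sigma$) if $c \in F_i$, $c$ appears in $F_i$ for the first time in the sense that either $i = 1$ or $c \notin F_{i-1}$, and $c \in F_j$ for every $j$ with $i < j \leq n$ (i.e., $c$ is never removed afterwards). *)

(* Defs.v *)
From HB Require Import structures.
From mathcomp Require Import all_boot all_order.
From mathcomp Require Export finmap.
Set Implicit Arguments. Unset Strict Implicit. Unset Printing Implicit Defensive.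
Local Open Scope fset_scope.

(* Clauses are abstract elements of a choiceType T.  A sequence
   sigma = (F_1,...,F_n) is a function F : nat -> {fset T}; only the
   values at indices 1..n are relevant. *)

Section Defs.
Variable T : choiceType.
Implicit Types (F C V : nat -> {fset T}) (c : T).

Definition volatile F (n i : nat) c : Prop :=
  c \in F i /\ exists j, (i < j <= n)%N /\ c \notin F j.

Definition cumulative F (n i : nat) c : Prop :=
  c \in F i /\ (i = 1%N \/ c \notin F i.-1) /\
  forall j, (i < j <= n)%N -> c \in F j.

Definition upd (X : nat -> {fset T}) (k : nat) (A : {fset T}) : nat -> {fset T} :=
  fun m => if m == k then A else X m.

(* step 2(c) for a fixed clause c at stage i: loop j over js = 1..i-1 *)
Fixpoint inner_loop (c : T) (i : nat) (js : seq nat)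
    (CV : (nat -> {fset T}) * (nat -> {fset T})) :=
  match js with
  | [::] => CV
  | j :: js' =>
      if c \in CV.1 j then
        (upd CV.1 j (CV.1 j `\ c),
         fun k => if (j <= k <= i.-1)%N then CV.2 k `|` [fset c] else CV.2 k)
      else inner_loop c i js' CV
  end.

Definition stage (F : nat -> {fset T}) (CV : (nat -> {fset T}) * (nat -> {fset T}))
    (i : nat) :=
  let V1 := upd CV.2 i (F i `\` F i.+1) in
  let C1 := upd CV.1 i ((F i `\` F i.-1) `\` V1 i) in
  foldl (fun cv c => inner_loop c i (iota 1 i.-1) cv)
        (C1, V1) (enum_fset (V1 i `&` F i.-1)).

Definition procedure (F : nat -> {fset T}) (n : nat) :=
  let V0 := upd (fun _ => fset0) 1 (F 1 `\` F 2) in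
  let C0 := upd (fun _ => fset0) 1 (F 1 `\` V0 1) in
  let CV := foldl (stage F) (C0, V0) (iota 2 (n - 2)) in
  (upd CV.1 n (F n `\` F n.-1), upd CV.2 n fset0).

End Defs.

(* Main.v *)
Require Import Defs.
From HB Require Import structures.
From mathcomp Require Import all_boot all_order finmap.
From mathcomp Require Import zify.
From Stdlib Require Import Classical_Prop.
Local Open Scope fset_scope.

Section Proof.
Variable T : choiceType.
Variable F : nat -> {fset T}.
Variable c : T.

Definition agree (CV CV' : (nat -> {fset T}) * (nat -> {fset T})) :=
  forall k, (c \in CV.1 k) = (c \in CV'.1 k) /\ (c \in CV.2 k) = (c \in CV'.2 k).

Lemma agree_refl CV : agree CV CV.
Proof. by move=> k. Qed.

Lemma agree_trans a b d : agree a b -> agree b d -> agree a d.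
Proof. move=> H1 H2 k; case: (H1 k) (H2 k) => -> -> [-> ->]; by []. Qed.
Arguments agree_trans {a b d}.


Lemma inner_other d i js CV : d != c -> agree (inner_loop d i js CV) CV.
Proof.
move=> dc; elim: js CV => [|j js IH] CV /=; first exact: agree_refl.
case: ifP => _; last exact: IH.
have cd : (c == d) = false by apply/negbTE; rewrite eq_sym.
move=> k /=; split.
  rewrite /upd; case: ifP => [/eqP->|//]; by rewrite in_fsetD1 cd.
case: ifP => // _; by rewrite in_fsetU in_fset1 cd orbF.
Qed.

Lemma inner_agree i js CV CV' : agree CV CV' ->
  agree (inner_loop c i js CV) (inner_loop c i js CV').
Proof.
elim: js CV CV' => [|j js IH] CV CV' H //=.
case: (H j) => -> _; case: ifP => _; last exact: IH.
move=> k /=; split.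
  rewrite /upd; case: ifP => _; first by rewrite !in_fsetD1; case: (H j) => ->.
  by case: (H k).
case: ifP => _; last by case: (H k).
by rewrite !in_fsetU; case: (H k) => _ ->.
Qed.

Lemma fold_agree i (s : seq T) CV CV' : uniq s -> agree CV CV' ->
  agree (foldl (fun cv d => inner_loop d i (iota 1 i.-1) cv) CV s)
        (if c \in s then inner_loop c i (iota 1 i.-1) CV' else CV').
Proof.
elim: s CV CV' => [|x s IH] CV CV' /=; first by [].
move=> /andP[xs us] H.
case: (eqVneq x c) => [exc|xc].
  rewrite exc in xs *; rewrite mem_head.
  have := IH (inner_loop c i (iota 1 i.-1) CV) _ us (agree_refl _).
  rewrite (negbTE xs) => H1; exact: (agree_trans H1 (@inner_agree i (iota 1 i.-1) _ _ H)).
rewrite in_cons eq_sym (negbTE xc) /=.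
apply: IH => //; exact: (agree_trans (@inner_other x i (iota 1 i.-1) CV xc) H).
Qed.

Lemma inner_found i js CV s : s \in js ->
  (forall j, j \in js -> (c \in CV.1 j) = (j == s)) ->
  inner_loop c i js CV = (upd CV.1 s (CV.1 s `\ c),
     fun k => if (s <= k <= i.-1)%N then CV.2 k `|` [fset c] else CV.2 k).
Proof.
elim: js => [|j js IH] //= sin H.
rewrite (H j (mem_head _ _)); case: (eqVneq j s) => [->//|js_].
apply: IH.
  by move: sin; rewrite in_cons eq_sym (negbTE js_).
by move=> k kin; apply: H; rewrite in_cons kin orbT.
Qed.

Definition Inv m (CV : (nat -> {fset T}) * (nat -> {fset T})) :=
  forall j, (1 <= j <= m)%N ->
    (c \in CV.1 j <-> cumulative F m.+1 j c) /\
    (c \in CV.2 j <-> volatile F m.+1 j c).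

Lemma Inv_agree m CV CV' : agree CV CV' -> Inv m CV' -> Inv m CV.
Proof. by move=> H I j hj; case: (H j) => -> ->; exact: I. Qed.

Arguments Inv_agree {m CV CV'}.

Lemma cum_step i j : (j < i)%N ->
  (cumulative F i.+1 j c <-> cumulative F i j c /\ c \in F i.+1).
Proof.
move=> ji; split.
  case=> a [b d]; split; last by apply: d; lia.
  by split=> //; split=> // l hl; apply: d; lia.
case=> [[a [b d]] e]; split=> //; split=> // l hl.
case: (eqVneq l i.+1) => [->//|ne]; apply: d; lia.
Qed.

Lemma vol_step i j : (j < i)%N ->
  (volatile F i.+1 j c <-> volatile F i j c \/ (c \in F j /\ c \notin F i.+1)).
Proof.
move=> ji; split.
  case=> a [l [hl nl]].
  case: (eqVneq l i.+1) => [el|ne]; first by right; rewrite -el.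
  by left; split=> //; exists l; split=> //; lia.
case=> [[a [l [hl nl]]]|[a b]]; split=> //.
  by exists l; split=> //; lia.
by exists i.+1; split=> //; lia.
Qed.

Lemma notvol i j : c \in F j -> ~ volatile F i j c ->
  forall l, (j < l <= i)%N -> c \in F l.
Proof.
move=> a nv l hl; apply/negPn/negP => nl; apply: nv; split=> //.
by exists l.
Qed.

Lemma run_start t : (1 <= t)%N -> c \in F t -> exists s, (1 <= s <= t)%N /\
  (s = 1%N \/ c \notin F s.-1) /\ forall l, (s <= l <= t)%N -> c \in F l.
Proof.
elim: t => [//|t IH] _ ct.
move: ct; case: (eqVneq t 0%N) => [->|t0] ct.
  exists 1%N; split=> //; split; first by left.
  by move=> l hl; have -> : l = 1%N by lia.
case ft: (c \in F t).
  have [|s [hs [hs1 hs2]]] := IH _ ft; first lia.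
  exists s; split; first lia; split=> // l hl.
  case: (eqVneq l t.+1) => [->//|ne]; apply: hs2; lia.
exists t.+1; split; first lia; split; first by right; rewrite /= ft.
by move=> l hl; have -> : l = t.+1 by lia.
Qed.

Lemma stage_inv m CV : (1 <= m)%N -> Inv m CV -> Inv m.+1 (stage F CV m.+1).
Proof.
move=> m1 IH.
set i := m.+1.
set V1 := upd CV.2 i (F i `\` F i.+1).
set C1 := upd CV.1 i ((F i `\` F i.-1) `\` V1 i).
have -> : stage F CV i = foldl (fun cv d => inner_loop d i (iota 1 i.-1) cv)
        (C1, V1) (enum_fset (V1 i `&` F i.-1)) by [].
apply: (Inv_agree (@fold_agree i _ _ _ (fset_uniq _) (agree_refl (C1, V1)))).
have V1i : V1 i = F i `\` F i.+1 by rewrite /V1 /upd eqxx.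
have C1i : C1 i = (F i `\` F i.-1) `\` V1 i by rewrite /C1 /upd eqxx.
have V1j : forall j, j != i -> V1 j = CV.2 j by move=> j /negbTE; rewrite /V1 /upd => ->.
have C1j : forall j, j != i -> C1 j = CV.1 j by move=> j /negbTE; rewrite /C1 /upd => ->.
have atC : c \in C1 i <-> cumulative F i.+1 i c.
  rewrite C1i V1i !in_fsetD; split.
    move=> /and3P[]; rewrite negb_and negbK => /orP[cn|nci] nc ci; last by rewrite ci in nci.
    split=> //; split; first by right.
    by move=> l hl; have -> : l = i.+1 by lia.
  case=> ci [[e1|nc] d]; first by move: e1; rewrite /i; lia.
  by rewrite nc ci d /=; lia.
have atV : c \in V1 i <-> volatile F i.+1 i c.
  rewrite V1i in_fsetD; split.
    by move=> /andP[a b]; split=> //; exists i.+1; split=> //; lia.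
  case=> a [l [hl nl]]; have el : l = i.+1 by lia.
  by rewrite a -el nl.
have mem_enum : (c \in enum_fset (V1 i `&` F i.-1)) =
   (c \in V1 i `&` F i.-1) by [].
rewrite mem_enum.
case: ifP => hS.
- move: hS; rewrite in_fsetI V1i in_fsetD => /andP[/andP[ni ci] cim].
  have [|s [hs [hs1 hs2]]] := @run_start i.-1 _ cim; first by rewrite /i; lia.
  have hs2' : forall l, (s <= l <= i)%N -> c \in F l.
    move=> l hl; case: (eqVneq l i) => [->//|ne]; apply: hs2; rewrite /i /=; lia.
  have cumE : forall j, (1 <= j <= m)%N -> c \in CV.1 j = (j == s).
    move=> j hj; have [H1 _] := IH j hj.
    apply/idP/eqP.
      move=> /H1 [a [b d]].
      have cl : forall l, (j <= l <= i)%N -> c \in F l.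
        move=> l hl; case: (eqVneq l j) => [->//|ne]; apply: d; lia.
      case: (ltngtP j s) => // js.
        have := cl s.-1; case: hs1 => [|ns]; first lia.
        by rewrite (negbTE ns); move=> H; exfalso; have := H ltac:(rewrite /i /= in hs *; lia).
      case: b => [|nj]; first lia.
      by rewrite hs2' in nj; last (rewrite /i /= in hs *; lia).
    move=> ej; rewrite ej in H1 *; apply/H1; split; first by apply: hs2; lia.
    split=> // l hl; apply: hs2'; lia.
  rewrite (@inner_found i (iota 1 i.-1) (C1, V1) s); first last.
  + move=> j; rewrite mem_iota => hj /=; rewrite C1j; last by rewrite /i /= in hj *; lia.
    by apply: cumE; rewrite /i /= in hj; lia.
  + by rewrite mem_iota; rewrite /i /= in hs *; lia.
  move=> j hj /=.
  case: (eqVneq j i) => [ej|nji].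
    have sn : (i == s) = false by apply/negbTE; rewrite /i /= in hs *; lia.
    rewrite ej /upd sn.
    have -> : (s <= i <= m)%N = false by rewrite /i /=; lia.
    by split.
  have ji : (j < i)%N by rewrite /i; lia.
  have jm : (1 <= j <= m)%N by lia.
  rewrite cum_step // vol_step //.
  have [H1 H2] := IH j jm.
  split.
    rewrite /upd; split.
      case: ifP => [/eqP->|ns]; first by rewrite in_fsetD1 eqxx.
      by rewrite C1j // cumE // ns.
    by case=> _ ; rewrite (negbTE ni).
  rewrite V1j //.
  case: ifP => hsj.
    rewrite in_fsetU in_fset1 eqxx orbT; split=> // _; right; split=> //.
    by apply: hs2'; lia.
  rewrite /i; split; first by move=> /H2 h; left.
  case=> [h|[a _]]; first exact/H2.
  apply/H2; split=> //; exists s.-1.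
  case: hs1 => [e|ns]; first lia.
  have : j != s.-1 by apply/eqP=> e; rewrite -e a in ns.
  by move=> ne; split=> //; lia.
have run2 : forall j, (j < i)%N -> c \in F j -> (forall l, (j < l <= i)%N -> c \in F l) ->
    c \in F i /\ c \in F i.-1.
  move=> j ji a d; split; first by apply: d; lia.
  case: (eqVneq j i.-1) => [<-//|ne]; apply: d; rewrite /i /= in ji ne *; lia.
move=> j hj /=.
case: (eqVneq j i) => [->|nji]; first by split.
have ji : (j < i)%N by rewrite /i; lia.
have jm : (1 <= j <= m)%N by lia.
have [H1 H2] := IH j jm.
rewrite cum_step // vol_step // C1j // V1j //.
move: hS; rewrite in_fsetI V1i in_fsetD => hS.
split.
  rewrite H1; split; last by case.
  move=> h; split=> //; case: h => a [_ d].
  have [fi fim] := run2 j ji a d.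
  by apply/negPn/negP => ni; move: hS; rewrite ni fi fim.
rewrite H2; split; first by left.
case=> [//|[a ni]].
case: (Classical_Prop.classic (volatile F i j c)) => // nv.
have [fi fim] := run2 j ji a (@notvol i j a nv).
by move: hS; rewrite ni fi fim.
Qed.

Lemma fold_inv k m CV : (1 <= m)%N -> Inv m CV ->
  Inv (m + k) (foldl (stage F) CV (iota m.+1 k)).
Proof.
elim: k m CV => [|k IH] m CV m1 H; first by rewrite addn0.
rewrite /= addnS -addSn; apply: IH; first lia.
exact: stage_inv.
Qed.

Lemma base_inv :
  Inv 1 (upd (fun _ => fset0) 1 (F 1 `\` (upd (fun _ => fset0) 1 (F 1 `\` F 2)) 1),
         upd (fun _ => fset0) 1 (F 1 `\` F 2)).
Proof.
move=> j hj; have -> : j = 1%N by lia.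
rewrite /upd /= !in_fsetD; split; split.
- move=> /andP[]; rewrite negb_and negbK => /orP[h|h] a; last by rewrite a in h.
  split=> //; split; first by left.
  by move=> l hl; have -> : l = 2 by lia.
- case=> a [_ d]; rewrite a d //.
- move=> /andP[a b]; split=> //; exists 2; split=> //.
- case=> a [l [hl nl]]; have el : l = 2 by lia.
  by rewrite a -el nl.
Qed.
End Proof.

Theorem mainTheorem1 (T : choiceType) (n : nat) (F : nat -> {fset T}) :
  (2 <= n)%N ->
  forall i : nat, (1 <= i <= n)%N ->
  forall c : T,
    (c \in (procedure F n).1 i <-> cumulative F n i c) /\
    (c \in (procedure F n).2 i <-> volatile F n i c).
Proof.
move=> n2 i hi c.
set V0 := upd (fun _ => fset0) 1 (F 1 `\` F 2).
set C0 := upd (fun _ => fset0) 1 (F 1 `\` V0 1).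
set CV := foldl (stage F) (C0, V0) (iota 2 (n - 2)).
have HI : Inv T F c n.-1 CV.
  have := @fold_inv T F c (n - 2) 1 _ (isT : (1 <= 1)%N) (@base_inv T F c).
  by have -> : (1 + (n - 2))%N = n.-1 by lia.
have e : (n.-1).+1 = n by lia.
rewrite /Inv e in HI.
have -> : procedure F n = (upd CV.1 n (F n `\` F n.-1), upd CV.2 n fset0) by [].
rewrite /upd /=.
case: (eqVneq i n) => [->|ne].
  rewrite in_fsetD in_fset0; split; split.
  - by move=> /andP[a b]; split=> //; split; [right|move=> l; lia].
  - by case=> a [[e1|nc] _]; [lia|rewrite a nc].
  - by [].
  - by case=> _ [l hl]; lia.
by apply: HI; lia.
Qed.
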